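(* In the line model below, for all positive integers $k,N$ there is a deterministic protocol after which player $P_{k+1}$ knows $\mathbf{A}_k\mathbf{A}_{k-1}\cdots\mathbf{A}_1\mathbf{x}$ (over $\mathbb{F}_2$), using $O(N^2\log_2(2k)+k)$ rounds.
   Context: Line model: players $P_0,\dots,P_{k+1}$ with links $\{P_{i-1},P_i\}$ for $i\in[k+1]$; $P_0$ holds $\mathbf{x}\in\mathbb{F}_2^N$, $P_i$ holds $\mathbf{A}_i\in\mathbb{F}_2^{N\times N}$ for $i\in[k]$, $P_{k+1}$ has no input. Communication is synchronous in rounds, one bit per link per round; local computation is free. *)

(* Defs.v *)
From HB Require Import structures.
From mathcomp Require Import all_boot all_order all_algebra.
Set Implicit Arguments. Unset Strict Implicit. Unset Printing Implicit Defensive.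
Import GRing.Theory.
Local Open Scope ring_scope.

Notation F2 := 'F_2.

(* Local input of a player: a column vector and a matrix.
   P_0 gets (x, 0); P_i (1 <= i <= k) gets (0, A_i); P_{k+1} gets (0, 0). *)
Definition LI (N : nat) := ('cV[F2]_N * 'M[F2]_N)%type.

(* Bits carried by the k+1 links in one round; link j joins P_j and P_{j+1}. *)
Definition RoundBits (k : nat) := 'I_k.+1 -> bool.

(* What player i observes in one round: bit on its left link, bit on its right link. *)
Definition Obs := (option bool * option bool)%type.

Definition obs_of (k : nat) (i : 'I_k.+2) (b : RoundBits k) : Obs :=
  ((if (0 < i)%N then Some (b (inord i.-1)) else None),
   (if (i < k.+1)%N then Some (b (inord i)) else None)).

Definition view (k : nat) (i : 'I_k.+2) (H : seq (RoundBits k)) : seq Obs :=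
  map (obs_of i) H.

(* A deterministic protocol on the line with players P_0..P_{k+1}.
   - dir r j : direction used on link j in round r (true = from P_j to P_{j+1},
     false = from P_{j+1} to P_j); a fixed schedule, so each link carries
     exactly one bit per round.
   - msg i r li v : the bits (towards left, towards right) that player i would
     send in round r, as a function of its own local input and its view so far.
   - out : the output function of P_{k+1}, from its final view. *)
Record protocol (k N : nat) := Protocol {
  dir : nat -> 'I_k.+1 -> bool;
  msg : 'I_k.+2 -> nat -> LI N -> seq Obs -> bool * bool;
  out : seq Obs -> 'cV[F2]_N
}.

Definition local_input (k N : nat) (x : 'cV[F2]_N) (A : nat -> 'M[F2]_N)
    (i : 'I_k.+2) : LI N :=
  if i == 0 :> nat then (x, 0)
  else if (i <= k)%N then (0, A (nat_of_ord i))
  else (0, 0).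

Fixpoint history (k N : nat) (p : protocol k N) (x : 'cV[F2]_N)
    (A : nat -> 'M[F2]_N) (r : nat) : seq (RoundBits k) :=
  match r with
  | 0 => [::]
  | r'.+1 =>
    let H := history p x A r' in
    rcons H (fun j : 'I_k.+1 =>
      if dir p r' j then
        let s : 'I_k.+2 := inord j in
        (msg p s r' (local_input x A s) (view s H)).2
      else
        let s : 'I_k.+2 := inord j.+1 in
        (msg p s r' (local_input x A s) (view s H)).1)
  end.

Definition prod_apply (k N : nat) (A : nat -> 'M[F2]_N) (x : 'cV[F2]_N)
    : 'cV[F2]_N :=
  foldl (fun y i => A i *m y) x (iota 1 k).

Definition computes_in (k N : nat) (p : protocol k N) (T : nat) : Prop :=
  forall (x : 'cV[F2]_N) (A : nat -> 'M[F2]_N),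
    out p (view (@ord_max k.+1) (history p x A T)) = prod_apply k A x.

(* Main.v *)
Require Import Defs.
From mathcomp Require Import all_boot all_order all_algebra.
From mathcomp Require Import zify.
From Stdlib Require Import FunctionalExtensionality.
Set Implicit Arguments. Unset Strict Implicit. Unset Printing Implicit Defensive.
Import GRing.Theory.

Lemma F2_nat (z : 'F_2) : ((z != 0)%:R : 'F_2)%R = z.
Proof. by move: z => [[|[|n]] Hn]; apply/val_inj. Qed.

Definition bitM (N : nat) (M : 'M[F2]_N) (q : nat) : bool :=
  match (insub q : option 'I_(N * N)) with
  | Some i => (mxvec M 0 i != 0)%R
  | None => false end.

Definition decM (N : nat) (s : nat -> bool) (r0 : nat) : 'M[F2]_N :=
  vec_mx (\row_(i < N * N) ((s (r0 + i))%:R : F2))%R.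

Lemma decM_ext N s1 s2 r0 : (forall q, q < N * N -> s1 (r0 + q) = s2 (r0 + q)) ->
  decM N s1 r0 = decM N s2 r0.
Proof.
move=> H; rewrite /decM; congr vec_mx; apply/rowP => i; rewrite !mxE H //.
Qed.

Lemma decM_enc N s r0 (M : 'M[F2]_N) :
  (forall q, q < N * N -> s (r0 + q) = bitM M q) -> decM N s r0 = M.
Proof.
move=> H; rewrite /decM -[RHS]mxvecK; congr vec_mx; apply/rowP => i.
rewrite !mxE H // /bitM valK.
idtac.
by rewrite F2_nat.
Qed.

Fixpoint st (N : nat) (t : nat) : nat :=
  match t with 0 => 0 | t'.+1 => st N t' + N * N + 2 ^ t' end.

Lemma st_mono N a b : a <= b -> st N a <= st N b.
Proof.
elim: b => [|b IH]; first by rewrite leqn0 => /eqP ->.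
rewrite leq_eqVlt => /orP [/eqP -> //|]; rewrite ltnS => /IH /= h; lia.
Qed.

Definition xmat (N : nat) (v : 'cV[F2]_N) : 'M[F2]_N := \matrix_(a, b) v a ord0.

Definition M0 (N : nat) (li : LI N) (j : nat) : 'M[F2]_N :=
  if j == 0 then xmat li.1 else li.2.

Fixpoint held (k N : nat) (j : nat) (li : LI N) (s : nat -> bool) (t : nat) : 'M[F2]_N :=
  match t with
  | 0 => M0 li j
  | t'.+1 => let h := held k j li s t' in
     if (2 ^ t %| k - j) && (2 ^ t' <= j) then (h *m decM N s (st N t' + 2 ^ t' - 1))%R
     else h
  end.

Definition act (k N : nat) j (li : LI N) (s : nat -> bool) r t : bool :=
  let d := (k - j) %% 2 ^ t.+1 in
  if d == 2 ^ t then bitM (held k j li s t) (r - st N t)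
  else if (0 < d) && (d < 2 ^ t) then s r.-1 else false.

Fixpoint pa (k N : nat) j (li : LI N) s r t : bool :=
  match t with 0 => false
  | t'.+1 => if st N t' <= r then act k j li s r t' else pa k j li s r t' end.

Definition tr (k N m : nat) j (li : LI N) s r : bool :=
  if (j == k) && (st N m <= r) then bitM (held k j li s m) (r - st N m)
  else pa k j li s r m.

Definition trc (k N m : nat) j (li : LI N) s r : bool :=
  tr k m j li (fun r' => if r' < r then s r' else false) r.

Definition lii (k N : nat) (x : 'cV[F2]_N) (A : nat -> 'M[F2]_N) (j : nat) : LI N :=
  local_input x A (inord j : 'I_k.+2).

Fixpoint S (k N m : nat) x A (j : nat) : nat -> bool :=
  match j with
  | 0 => trc k m 0 (@lii k N x A 0) (fun _ => false)
  | j'.+1 => trc k m j'.+1 (@lii k N x A j'.+1) (S k N m x A j')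
  end.

Definition Left (k N m : nat) x A (j : nat) : nat -> bool :=
  match j with 0 => fun _ => false | j'.+1 => @S k N m x A j' end.

Lemma S_eq k N m x A j : @S k N m x A j = trc k m j (lii k x A j) (Left k m x A j).
Proof. by case: j. Qed.

Lemma held_ext k N j (li : LI N) s1 s2 t :
  (forall r, r < st N t -> s1 r = s2 r) -> held k j li s1 t = held k j li s2 t.
Proof.
elim: t => [//|t IH] H /=.
rewrite IH; last by move=> r Hr; apply: H => /=; lia.
by rewrite (@decM_ext N s1 s2) // => q Hq; apply: H => /=; lia.
Qed.

Lemma pa_phase k N j (li : LI N) s r t u :
  st N t <= r < st N t.+1 -> t < u -> pa k j li s r u = act k j li s r t.
Proof.
move=> /andP [H1 H2]; elim: u => [//|u IH]; rewrite ltnS leq_eqVlt => /orP [/eqP <-|Hu] /=.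
  by rewrite H1.
have hs : st N t.+1 <= st N u by apply: st_mono.
case: leqP => h; first by exfalso; lia.
by apply: IH.
Qed.

Lemma dmod K P h : 0 < P -> K %% (2 * P) = P -> h <= P -> (K - h) %% (2 * P) = P - h.
Proof.
move=> HP Hm Hh; rewrite {1}(divn_eq K (2 * P)) Hm.
move: (K %/ (2 * P)) => c.
have -> : c * (2 * P) + P - h = c * (2 * P) + (P - h) by lia.
by rewrite modnMDl modn_small //; lia.
Qed.

Lemma relay k N m x A t s0 h q : t < m -> (k - s0) %% 2 ^ t.+1 = 2 ^ t -> h < 2 ^ t ->
  q < N * N ->
  @S k N m x A (s0 + h) (st N t + h + q) =
  bitM (held k s0 (lii k x A s0) (Left k m x A s0) t) q.
Proof.
move=> Htm Hm; have HP : 0 < 2 ^ t by rewrite expn_gt0.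
elim: h => [|h IH] Hh Hq.
  rewrite addn0 S_eq /trc /tr.
  have -> : (s0 == k) = false.
    by apply/negbTE/eqP => E; move: Hm; rewrite E subnn mod0n; lia.
  rewrite /= (@pa_phase _ _ _ _ _ _ t) //; last by rewrite /=; lia.
  rewrite /act Hm eqxx.
  have -> : st N t + 0 + q - st N t = q by lia.
  congr bitM; apply: held_ext => r Hr; rewrite ifT //; lia.
rewrite addnS S_eq /trc /tr /=.
have Hd : (k - (s0 + h).+1) %% 2 ^ t.+1 = 2 ^ t - h.+1.
  rewrite -addnS subnDA expnS; apply: dmod => //; [by rewrite -expnS | lia].
have -> : ((s0 + h).+1 == k) = false.
  by apply/negbTE/eqP => E; move: Hd; rewrite E subnn mod0n; lia.
rewrite /= (@pa_phase _ _ _ _ _ _ t) //; last by rewrite /=; lia.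
rewrite /act Hd.
have -> : (2 ^ t - h.+1 == 2 ^ t) = false by apply/negbTE/eqP; lia.
have -> : (0 < 2 ^ t - h.+1) && (2 ^ t - h.+1 < 2 ^ t) by apply/andP; split; lia.
rewrite ifT; last by lia.
have -> : (st N t + h.+1 + q).-1 = st N t + h + q by lia.
by apply: IH => //; lia.
Qed.

Definition Mat (N : nat) (x : 'cV[F2]_N) (A : nat -> 'M[F2]_N) (j : nat) : 'M[F2]_N :=
  if j == 0 then xmat x else A j.

Fixpoint bp (N : nat) x A (a n : nat) : 'M[F2]_N :=
  match n with 0 => 1%:M | n'.+1 => (Mat x A (a + n') *m bp N x A a n')%R end.

Definition bpe (N : nat) x A (a b : nat) : 'M[F2]_N := @bp N x A a (b - a).

Lemma bp_add N x A a n1 n2 : @bp N x A a (n1 + n2) = (@bp N x A (a + n1) n2 *m @bp N x A a n1)%R.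
Proof.
elim: n2 => [|n2 IH]; first by rewrite addn0 /= mul1mx.
by rewrite addnS /= IH mulmxA addnA.
Qed.

Lemma bpe_split N x A a b c : a <= b -> b <= c ->
  (@bpe N x A b c *m @bpe N x A a b)%R = @bpe N x A a c.
Proof.
move=> H1 H2; rewrite /bpe.
have -> : c - a = (b - a) + (c - b) by lia.
by rewrite bp_add subnKC.
Qed.

Lemma M0_lii k N x A j : j <= k -> M0 (@lii k N x A j) j = Mat x A j.
Proof.
move=> Hj; rewrite /M0 /lii /local_input /Mat inordK; last lia.
by case: j Hj => [|j] //= Hj; rewrite Hj.
Qed.

Lemma Inv k N m x A t : t <= m -> forall j, j <= k -> 2 ^ t %| k - j ->
  held k j (@lii k N x A j) (Left k m x A j) t = @bpe N x A (j.+1 - 2 ^ t) j.+1.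
Proof.
elim: t => [|t IH] Htm j Hjk Hdiv.
  by rewrite /= M0_lii // /bpe subn1 /= subSnn /= addn0 mulmx1.
have HP : 0 < 2 ^ t by rewrite expn_gt0.
have Hdiv' : 2 ^ t %| k - j by apply: dvdn_trans Hdiv; apply: dvdn_exp2l.
rewrite /= Hdiv IH //; last lia.
case: leqP => Hj /=; last first.
  rewrite expnS; have -> : j.+1 - 2 ^ t = 0 by lia.
  by have -> : j.+1 - 2 * 2 ^ t = 0 by lia.
set P := 2 ^ t in HP Hdiv' Hj *.
have Hs0k : j - P <= k by lia.
have Hdivs : P %| k - (j - P).
  have -> : k - (j - P) = (k - j) + P by lia.
  by rewrite dvdn_add.
have Hms : (k - (j - P)) %% 2 ^ t.+1 = P.
  case/dvdnP: Hdiv => c Hc.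
  have -> : k - (j - P) = c * 2 ^ t.+1 + P by lia.
  by rewrite modnMDl modn_small // expnS; lia.
case: j Hjk Hdiv Hdiv' Hj Hs0k Hdivs Hms => [|j] Hjk Hdiv Hdiv' Hj Hs0k Hdivs Hms; first lia.
rewrite /=.
rewrite (@decM_enc N _ _ (held k (j.+1 - P) (lii k x A (j.+1 - P)) (Left k m x A (j.+1 - P)) t)).
  rewrite IH //; last lia.
  rewrite expnS -/P.
  have -> : (j.+1 - P).+1 = j.+2 - P by lia.
  have -> : j.+2 - P - P = j.+2 - 2 * P by lia.
  apply: bpe_split; lia.
move=> q Hq.
have -> : st N t + P - 1 + q = st N t + (P - 1) + q by lia.
have {1}-> : j = (j.+1 - P) + (P - 1) by lia.
by apply: relay => //; lia.
Qed.

Definition dec (v : seq Obs) (r : nat) : bool :=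
  match nth (None, None) v r with (Some b, _) => b | _ => false end.

Definition proto (k N m : nat) (i0 : 'I_N) : protocol k N :=
  Protocol (fun _ _ => true) (fun (i : 'I_k.+2) r (li : LI N) v => (false, trc k m i li (dec v) r))
    (fun v => (\col_a (decM N (dec v) (st N m)) a i0)%R).

Lemma trc_ext k N m j (li : LI N) s1 s2 r : (forall r', r' < r -> s1 r' = s2 r') ->
  trc k m j li s1 r = trc k m j li s2 r.
Proof.
move=> H; rewrite /trc; congr tr; apply: functional_extensionality => r'.
by case: ifP => // /H.
Qed.

Lemma dec_view k N m x A (r : nat) (j : 'I_k.+2) r' : r' < r ->
  dec (view j (mkseq (fun r' (i : 'I_k.+1) => @S k N m x A i r') r)) r' = Left k m x A j r'.
Proof.
move=> Hr; rewrite /dec /view (nth_map (fun _ : 'I_k.+1 => false)); last by rewrite size_mkseq.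
rewrite nth_mkseq // /obs_of.
case: j => [[|j] Hj] //=.
by rewrite inordK //; lia.
Qed.

Lemma history_eq k N m (i0 : 'I_N) x A r :
  history (proto k m i0) x A r = mkseq (fun r' (i : 'I_k.+1) => @S k N m x A i r') r.
Proof.
elim: r => [//|r IH] /=.
rewrite IH mkseqS; congr rcons.
apply: functional_extensionality => j.
have Hj : (j : nat) < k.+2 by case: j => /= j Hj; lia.
rewrite inordK // S_eq /lii.
by apply: trc_ext => r' Hr'; rewrite (dec_view _ _ _ _ Hr') inordK.
Qed.

Lemma final_bits k N m x A q : q < N * N ->
  @S k N m x A k (st N m + q) = bitM (held k k (lii k x A k) (Left k m x A k) m) q.
Proof.
move=> Hq; rewrite S_eq /trc /tr eqxx leq_addr /=.
have -> : st N m + q - st N m = q by lia.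
congr bitM; apply: held_ext => r Hr; rewrite ifT //; lia.
Qed.

Lemma foldl_bp N x A n : forall a (y : 'cV[F2]_N), 0 < a ->
  foldl (fun y i => (A i *m y)%R) y (iota a n) = (@bp N x A a n *m y)%R.
Proof.
elim: n => [|n IH] a y Ha; first by rewrite /= mul1mx.
have -> : iota a n.+1 = a :: iota a.+1 n by [].
rewrite [foldl _ _ (_ :: _)]/= IH; last lia.
have -> : n.+1 = 1 + n by [].
rewrite bp_add /= addn0 mulmx1 /Mat -mulmxA addn1.
by have -> : (a == 0) = false by apply/negbTE; lia.
Qed.

Lemma st_closed N t : st N t + 1 = t * (N * N) + 2 ^ t.
Proof. elim: t => [//|t IH] /=; rewrite expnS; lia. Qed.

Theorem mainTheorem5 :
  exists C : nat, forall k N : nat, (0 < k)%N -> (0 < N)%N ->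
    exists (p : protocol k N) (T : nat),
      computes_in p T /\ (T <= C * (N ^ 2 * trunc_log 2 (2 * k) + k))%N.
Proof.
exists 2 => k N Hk HN.
set m := trunc_log 2 (2 * k).
have Hm1 : 2 ^ m <= 2 * k by apply: trunc_logP => //; lia.
have Hm2 : 2 * k < 2 ^ m.+1 by apply: trunc_log_ltn.
have Hm0 : 1 <= m by apply: trunc_log_max => //; lia.
exists (proto k m (Ordinal HN)), (st N m + N * N); split; last first.
  have := st_closed N m; rewrite expnS in Hm2.
  have -> : N ^ 2 = N * N by rewrite expnS expn1.
  nia.
move=> x A; rewrite /= history_eq.
rewrite (@decM_ext N _ (@S k N m x A k)); last first.
  move=> q Hq; rewrite dec_view /=; last lia.
  done.
rewrite (@decM_enc N _ _ _ (@final_bits k N m x A)).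
rewrite (@Inv k N m x A m) // ?subnn ?dvdn0 //.
have -> : k.+1 - 2 ^ m = 0 by rewrite expnS in Hm2; lia.
rewrite /prod_apply (@foldl_bp N x A) // /bpe subn0.
have -> : k.+1 = 1 + k by [].
rewrite bp_add /= mulmx1 /Mat /=.
apply/matrixP => a b; rewrite ord1 !mxE; apply: eq_bigr => c _; rewrite !mxE.
done.
Qed.
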